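(* Let $b,\beta,\gamma$ be real with $\beta>0$ and $0<b+1<\gamma<b+1+\beta$, and for $0\le v<1$ let $$K(v)=\frac{F(b,\beta;\gamma;v)}{F(b+1,\beta;\gamma;v)}.$$ Then: (i) $K(0)=1$; (ii) $\lim_{v\to1}K(v)=0$; (iii) if $b\ge0$, or if $-1<b<0$ and $\gamma\ge\beta$, then $K$ is monotone decreasing; (iv) if $-1<b<0$ and $\gamma<\beta$, then the minimum of $K$ is a negative value and $K(v)$ approaches $0$ from below as $v\to1$; moreover $\inf_{0\le v<1}K(v)\ge b/(b+1)$.
   Context: $F(\alpha,\beta;\gamma;z)=1+\sum_{i\ge1}\frac{(\alpha)_i(\beta)_i}{(\gamma)_i}\frac{z^i}{i!}$ is the Gauss hypergeometric function, with $(\alpha)_i=\alpha(\alpha+1)\cdots(\alpha+i-1)$, for $|z|<1$. *)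

(* Defs.v *)
From Stdlib Require Import Reals Factorial.
From Coquelicot Require Import Coquelicot.
Open Scope R_scope.

Fixpoint poch (a : R) (n : nat) : R :=
  match n with
  | O => 1
  | S k => poch a k * (a + INR k)
  end.

Definition hyp_coef (al be ga : R) (n : nat) : R :=
  poch al n * poch be n / (poch ga n * INR (Factorial.fact n)).

(* Gauss hypergeometric function F(al,be;ga;z), meaningful for |z| < 1. *)
Definition hyp2F1 (al be ga z : R) : R := PSeries (hyp_coef al be ga) z.

Definition Kfun (b be ga v : R) : R :=
  hyp2F1 b be ga v / hyp2F1 (b + 1) be ga v.

(* Main.v *)
Require Import Defs.
From Stdlib Require Import Reals Lra Lia Psatz Classical.
From Coquelicot Require Import Coquelicot.
Open Scope R_scope.


Lemma poch_pos a n : 0 < a -> 0 < poch a n.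
Proof. intros Ha. induction n as [|n IH]; simpl. lra.
  apply Rmult_lt_0_compat; auto. pose proof (pos_INR n). lra. Qed.

Lemma poch_shift b n : poch b n * (b + INR n) = b * poch (b+1) n.
Proof. induction n as [|n IH]; simpl poch. simpl. ring.
  rewrite S_INR. replace (poch b n * (b + INR n) * (b + INR n + 1))
   with ((poch b n * (b + INR n)) * (b + INR n + 1)) by ring. rewrite IH. ring. Qed.

Lemma hyp_coef_S x y z n : 0 < z ->
  hyp_coef x y z (S n) = hyp_coef x y z n * ((x + INR n) * (y + INR n) / ((z + INR n) * (INR n + 1))).
Proof. intros Hz. unfold hyp_coef. simpl poch. rewrite fact_simpl, mult_INR, S_INR.
  pose proof (poch_pos z n Hz). pose proof (pos_INR n). pose proof (INR_fact_neq_0 n).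
  field. repeat split; lra. Qed.

Lemma hyp_coef_0 x y z : hyp_coef x y z 0 = 1.
Proof. unfold hyp_coef. simpl. field. Qed.

Section Coefs.
Variables b be ga : R.
Hypothesis hbe : 0 < be.
Hypothesis h1 : 0 < b + 1.
Hypothesis h2 : b + 1 < ga.

Let a := hyp_coef b be ga.
Let p := hyp_coef (b+1) be ga.

Lemma p_pos n : 0 < p n.
Proof. unfold p, hyp_coef. pose proof (poch_pos (b+1) n h1). pose proof (poch_pos be n hbe).
  assert (0 < ga) by lra. pose proof (poch_pos ga n H1). pose proof (INR_fact_lt_0 n).
  apply Rdiv_lt_0_compat; apply Rmult_lt_0_compat; auto. Qed.

Lemma a_rel n : a n * (b + INR n) = b * p n.
Proof. unfold a, p, hyp_coef.
  transitivity ((poch b n * (b + INR n)) * poch be n / (poch ga n * INR (Factorial.fact n))).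
  unfold Rdiv; ring. rewrite poch_shift. unfold Rdiv; ring. Qed.

Lemma a_eq n : (1 <= n)%nat -> a n = b * p n / (b + INR n).
Proof. intros Hn. apply le_INR in Hn. simpl in Hn. rewrite <- a_rel. field. lra. Qed.

Lemma p_S n : p (S n) = p n * ((b + 1 + INR n) * (be + INR n) / ((ga + INR n) * (INR n + 1))).
Proof. unfold p. apply hyp_coef_S. lra. Qed.

Lemma g_eq n : p (S n) - a (S n) = p n * (be + INR n) / (ga + INR n).
Proof. rewrite (a_eq (S n)) by lia. rewrite p_S. rewrite S_INR. pose proof (pos_INR n).
  field. repeat split; lra. Qed.

End Coefs.


Definition psum (c : nat -> R) (x : R) (N : nat) := sum_f_R0 (fun n => c n * x ^ n) N.

Lemma ps_lim c x : ex_pseries c x -> is_lim_seq (psum c x) (PSeries c x).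
Proof. intros E. pose proof (PSeries_correct c x E) as H. unfold is_pseries, is_series in H.
  apply is_lim_seq_ext with (sum_n (fun k => scal (pow_n x k) (c k))).
  intros N. rewrite sum_n_Reals. apply sum_eq. intros. rewrite pow_n_pow. unfold scal; simpl. unfold mult; simpl. ring.
  exact H. Qed.

Lemma lim_le_const (u : nat -> R) (l : R) c : is_lim_seq u l -> (forall n, u n <= c) -> l <= c.
Proof. intros H Hc. assert (Hr := is_lim_seq_le u (fun _ => c) l c Hc H (is_lim_seq_const c)).
  simpl in Hr. exact Hr. Qed.

Lemma lim_ge_const (u : nat -> R) (l : R) c : is_lim_seq u l -> (forall n, c <= u n) -> c <= l.
Proof. intros H Hc. assert (Hr := is_lim_seq_le (fun _ => c) u c l Hc (is_lim_seq_const c) H).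
  simpl in Hr. exact Hr. Qed.

Lemma psum_S c x N : psum c x (S N) = psum c x N + c (S N) * x ^ (S N).
Proof. reflexivity. Qed.

Lemma sum_nonneg_first (f : nat -> R) N : (forall n, 0 <= f n) -> f 0%nat <= sum_f_R0 f N.
Proof. intros H. induction N; simpl. lra. specialize (H (S N)). lra. Qed.

Lemma sum_mono_idx (f : nat -> R) n k : (forall n, 0 <= f n) -> sum_f_R0 f n <= sum_f_R0 f (n + k).
Proof. intros H. induction k. rewrite Nat.add_0_r. lra. rewrite Nat.add_succ_r. simpl. specialize (H (S (n+k))). lra. Qed.

Lemma pos_ps c x : (forall n, 0 <= c n) -> 0 <= x -> ex_pseries c x -> c 0%nat <= PSeries c x.
Proof. intros Hc Hx E. apply lim_ge_const with (psum c x). apply ps_lim; auto.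
  intros n. unfold psum. replace (c 0%nat) with (c 0%nat * x ^ 0) by (simpl; ring).
  apply (sum_nonneg_first (fun n => c n * x ^ n)). intros m. apply Rmult_le_pos; auto. apply pow_le; auto. Qed.

Lemma psum_le_ps c x N : (forall n, 0 <= c n) -> 0 <= x -> ex_pseries c x -> psum c x N <= PSeries c x.
Proof. intros Hc Hx E. apply is_lim_seq_incr_compare. apply ps_lim; auto.
  intros n. rewrite psum_S. assert (0 <= c (S n) * x ^ S n) by (apply Rmult_le_pos; auto; apply pow_le; auto). lra. Qed.

Lemma lim_frac c d : 0 < d -> is_lim_seq (fun n => (c + INR n) / (d + INR n)) 1.
Proof. intros Hd.
  apply is_lim_seq_ext with (fun n => 1 + (c - d) * / (d + INR n)).
  intros n. pose proof (pos_INR n). field. lra.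
  replace (Finite 1) with (Finite (1 + (c - d) * 0)) by (f_equal; ring).
  apply is_lim_seq_plus'. apply is_lim_seq_const.
  apply is_lim_seq_mult'. apply is_lim_seq_const.
  replace (Finite 0) with (Rbar_inv p_infty) by reflexivity.
  apply is_lim_seq_inv. eapply is_lim_seq_plus. apply is_lim_seq_const. apply is_lim_seq_INR.
  simpl. constructor. discriminate. Qed.

Lemma disk_cmp (c d : nat -> R) M x : 0 <= M -> (forall n, Rabs (c n) <= M * d n) -> CV_disk d x -> CV_disk c x.
Proof. intros HM H D. unfold CV_disk in *.
  apply (@ex_series_le R_AbsRing R_CompleteNormedModule) with (fun n => M * Rabs (d n * x ^ n)).
  intros n. change (norm (Rabs (c n * x ^ n))) with (Rabs (Rabs (c n * x ^ n))).
  rewrite Rabs_Rabsolu, !Rabs_mult. specialize (H n).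
  assert (0 <= Rabs (x ^ n)) by apply Rabs_pos.
  assert (Rabs (c n) * Rabs (x^n) <= M * d n * Rabs (x^n)) by (apply Rmult_le_compat_r; auto).
  assert (d n <= Rabs (d n)) by apply Rle_abs.
  assert (0 <= M * d n) by (pose proof (Rabs_pos (c n)); lra).
  assert (0 <= M * (Rabs (d n) - d n)) by (apply Rmult_le_pos; lra).
  assert (0 <= M * (Rabs (d n) - d n) * Rabs (x^n)) by (apply Rmult_le_pos; lra).
  nra.
  apply (@ex_series_scal_l R_AbsRing R_NormedModule M) in D. exact D. Qed.

Lemma disk_radius c : (forall x, Rabs x < 1 -> CV_disk c x) -> forall x, Rabs x < 1 -> Rbar_lt (Rabs x) (CV_radius c).
Proof. intros H x Hx. set (r := (Rabs x + 1) / 2).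
  assert (Hr : Rabs r < 1). { unfold r. pose proof (Rabs_pos x). rewrite Rabs_pos_eq; lra. }
  assert (D := H r Hr). unfold CV_radius. destruct (Lub_Rbar_correct (CV_disk c)) as [Hub _].
  specialize (Hub r D). destruct (Lub_Rbar (CV_disk c)); simpl in *; auto. unfold r in Hub. lra. Qed.


Lemma lin4 (f1 f2 f3 f4 : nat -> R) c1 c2 c3 c4 N :
  sum_f_R0 (fun k => c1 * f1 k + c2 * f2 k + c3 * f3 k + c4 * f4 k) N =
  c1 * sum_f_R0 f1 N + c2 * sum_f_R0 f2 N + c3 * sum_f_R0 f3 N + c4 * sum_f_R0 f4 N.
Proof. induction N; simpl. ring. rewrite IHN. ring. Qed.

Lemma sum_nonpos (f : nat -> R) N : (forall n, (n <= N)%nat -> f n <= 0) -> sum_f_R0 f N <= 0.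
Proof. intros H. induction N; simpl. apply H; lia.
  assert (sum_f_R0 f N <= 0) by (apply IHN; intros; apply H; lia).
  assert (f (S N) <= 0) by (apply H; lia). lra. Qed.

Lemma pow_cross u v k m : 0 <= u -> u <= v -> (k < m)%nat -> u ^ m * v ^ k <= v ^ m * u ^ k.
Proof. intros Hu Huv Hkm. replace m with (k + (m - k))%nat by lia. rewrite !pow_add.
  assert (u ^ (m - k) <= v ^ (m - k)) by (apply pow_incr; lra).
  assert (0 <= u ^ k * v ^ k). { apply Rmult_le_pos; apply pow_le; lra. }
  nra. Qed.

Lemma mono_core (a p : nat -> R) (u v : R) :
  0 <= u -> u < v -> ex_pseries a u -> ex_pseries a v -> ex_pseries p u -> ex_pseries p v ->
  (forall k m, (k < m)%nat -> a m * p k <= a k * p m) ->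
  PSeries a v * PSeries p u - PSeries a u * PSeries p v <= (a 1%nat * p 0%nat - a 0%nat * p 1%nat) * (v - u).
Proof. intros Hu Huv Eau Eav Epu Epv H.
  set (D := fun N => psum a v N * psum p u N - psum a u N * psum p v N).
  assert (HD : forall N, D (S N) <= D N).
  { intros N. unfold D. rewrite !psum_S.
    assert (E : sum_f_R0 (fun k => (a (S N) * p k - a k * p (S N)) * (v ^ S N * u ^ k - u ^ S N * v ^ k)) N
       = (a (S N) * v ^ S N) * psum p u N + (- (a (S N) * u ^ S N)) * psum p v N
         + (- (p (S N) * v ^ S N)) * psum a u N + (p (S N) * u ^ S N) * psum a v N).
    { unfold psum. rewrite <- lin4. apply sum_eq. intros. ring. }
    assert (sum_f_R0 (fun k => (a (S N) * p k - a k * p (S N)) * (v ^ S N * u ^ k - u ^ S N * v ^ k)) N <= 0).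
    { apply sum_nonpos. intros k Hk.
      assert (a (S N) * p k - a k * p (S N) <= 0) by (assert (H' := H k (S N) ltac:(lia)); lra).
      assert (0 <= v ^ S N * u ^ k - u ^ S N * v ^ k) by (assert (H' := pow_cross u v k (S N) Hu ltac:(lra) ltac:(lia)); lra).
      nra. }
    rewrite E in H0. nra. }
  assert (HD1 : forall N, D (S N) <= D 1%nat).
  { induction N. lra. specialize (HD (S N)). lra. }
  assert (D1 : D 1%nat = (a 1%nat * p 0%nat - a 0%nat * p 1%nat) * (v - u)).
  { unfold D, psum. simpl. ring. }
  rewrite <- D1. apply lim_le_const with (fun N => D (S N)); auto.
  apply is_lim_seq_incr_1 with (u := D). unfold D.
  apply is_lim_seq_minus'; apply is_lim_seq_mult'; apply ps_lim; auto. Qed.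


Section Conv.
Variables b be ga : R.
Hypothesis hbe : 0 < be.
Hypothesis h1 : 0 < b + 1.
Hypothesis h2 : b + 1 < ga.

Let a := hyp_coef b be ga.
Let p := hyp_coef (b+1) be ga.
Definition gco b be ga n := hyp_coef (b+1) be ga n * (be + INR n) / (ga + INR n).
Let g := gco b be ga.

Lemma disk_p x : Rabs x < 1 -> CV_disk p x.
Proof. intros Hx. apply CV_disk_DAlembert with 1.
  intros n. pose proof (p_pos b be ga hbe h1 h2 n). unfold p. lra.
  apply is_lim_seq_ext with (fun n => ((b + 1 + INR n) / (1 + INR n)) * ((be + INR n) / (ga + INR n))).
  intros n. pose proof (p_pos b be ga hbe h1 h2 n). pose proof (pos_INR n).
  assert (E : p (S n) / p n = ((b + 1 + INR n) / (1 + INR n)) * ((be + INR n) / (ga + INR n))).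
  { unfold p. rewrite p_S by auto. field. repeat split; lra. }
  rewrite E. symmetry. apply Rabs_pos_eq. apply Rmult_le_pos; apply Rdiv_le_0_compat; lra.
  replace (Finite 1) with (Finite (1 * 1)) by (f_equal; ring).
  apply is_lim_seq_mult'; apply lim_frac; lra.
  right. split. lra. rewrite Rinv_1. auto. Qed.

Lemma a_bound n : Rabs (a n) <= (1 + Rabs b / (b + 1)) * p n.
Proof. pose proof (p_pos b be ga hbe h1 h2 n) as Hp. fold p in Hp.
  assert (0 <= Rabs b / (b+1)) by (apply Rdiv_le_0_compat; [apply Rabs_pos|lra]).
  destruct n.
  - unfold a, p. rewrite !hyp_coef_0. rewrite Rabs_R1. lra.
  - unfold a. rewrite a_eq by (auto; lia). fold p. pose proof (pos_INR n). rewrite S_INR.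
    unfold Rdiv. rewrite !Rabs_mult. rewrite (Rabs_pos_eq (p (S n))) by lra.
    rewrite Rabs_inv. rewrite (Rabs_pos_eq (b + (INR n + 1))) by lra.
    assert (/ (b + (INR n + 1)) <= / (b+1)) by (apply Rinv_le_contravar; lra).
    assert (0 <= Rabs b) by apply Rabs_pos.
    assert (Rabs b * / (b + (INR n + 1)) <= Rabs b * / (b+1)) by (apply Rmult_le_compat_l; lra).
    assert (0 <= Rabs b * / (b + (INR n + 1))) by (apply Rmult_le_pos; auto; left; apply Rinv_0_lt_compat; lra).
    nra. Qed.

Lemma g_bound n : Rabs (g n) <= (1 + be / ga) * p n.
Proof. pose proof (p_pos b be ga hbe h1 h2 n) as Hp. fold p in Hp. pose proof (pos_INR n).
  unfold g, gco. fold p. rewrite Rabs_pos_eq.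
  2:{ apply Rdiv_le_0_compat. apply Rmult_le_pos; lra. lra. }
  apply Rmult_le_reg_r with (ga + INR n). lra. unfold Rdiv. rewrite Rmult_assoc, Rinv_l by lra.
  assert (0 < ga) by lra.
  assert (be / ga * INR n >= 0) by (apply Rle_ge, Rmult_le_pos; [apply Rdiv_le_0_compat|]; lra).
  assert (be + INR n <= (1 + be / ga) * (ga + INR n)).
  { replace ((1 + be / ga) * (ga + INR n)) with (ga + INR n + be + be / ga * INR n) by (field; lra). lra. }
  nra. Qed.

Lemma disk_a x : Rabs x < 1 -> CV_disk a x.
Proof. intros Hx. apply disk_cmp with p (1 + Rabs b / (b + 1)).
  assert (0 <= Rabs b / (b+1)) by (apply Rdiv_le_0_compat; [apply Rabs_pos|lra]). lra.
  apply a_bound. apply disk_p; auto. Qed.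

Lemma disk_g x : Rabs x < 1 -> CV_disk g x.
Proof. intros Hx. apply disk_cmp with p (1 + be / ga).
  assert (0 <= be / ga) by (apply Rdiv_le_0_compat; lra). lra.
  apply g_bound. apply disk_p; auto. Qed.

Lemma ex_p x : Rabs x < 1 -> ex_pseries p x.
Proof. intros; apply CV_disk_correct, disk_p; auto. Qed.
Lemma ex_a x : Rabs x < 1 -> ex_pseries a x.
Proof. intros; apply CV_disk_correct, disk_a; auto. Qed.
Lemma ex_g x : Rabs x < 1 -> ex_pseries g x.
Proof. intros; apply CV_disk_correct, disk_g; auto. Qed.

Lemma cont_p x : Rabs x < 1 -> continuity_pt (PSeries p) x.
Proof. intros; apply PSeries_continuity, disk_radius; auto. apply disk_p. Qed.
Lemma cont_a x : Rabs x < 1 -> continuity_pt (PSeries a) x.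
Proof. intros; apply PSeries_continuity, disk_radius; auto. apply disk_a. Qed.

Lemma Gsplit x : Rabs x < 1 -> PSeries p x - PSeries a x = x * PSeries g x.
Proof. intros Hx. rewrite <- PSeries_minus by (apply ex_p || apply ex_a; auto).
  rewrite PSeries_decr_1_aux.
  2:{ unfold PS_minus, plus, opp; simpl. unfold p, a. rewrite !hyp_coef_0. ring. }
  f_equal. apply PSeries_ext. intros n. unfold PS_decr_1, PS_minus, plus, opp; simpl.
  unfold p, a, g, gco. rewrite <- (g_eq b be ga h1 h2 n). ring. Qed.

Lemma p_ps_pos x : 0 <= x < 1 -> 0 < PSeries p x.
Proof. intros Hx. apply Rlt_le_trans with (p 0%nat). unfold p. rewrite hyp_coef_0. lra.
  apply pos_ps. intros; left; apply p_pos; auto. lra. apply ex_p. rewrite Rabs_pos_eq; lra. Qed.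

Lemma g_pos n : 0 < g n.
Proof. unfold g, gco. pose proof (p_pos b be ga hbe h1 h2 n). pose proof (pos_INR n).
  apply Rdiv_lt_0_compat. apply Rmult_lt_0_compat; lra. lra. Qed.

Lemma g_ps_pos x : 0 <= x < 1 -> 0 < PSeries g x.
Proof. intros Hx. apply Rlt_le_trans with (g 0%nat). apply g_pos.
  apply pos_ps. intros; left; apply g_pos; auto. lra. apply ex_g. rewrite Rabs_pos_eq; lra. Qed.

End Conv.


Lemma div_lt_cross x y Bu Bv : 0 < Bu -> 0 < Bv -> x * Bu < y * Bv -> x / Bv < y / Bu.
Proof. intros Hu Hv H. apply Rminus_lt_0.
  replace (y / Bu - x / Bv) with ((y * Bv - x * Bu) / (Bu * Bv)) by (field; lra).
  apply Rdiv_lt_0_compat. lra. nra. Qed.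

Section Main1.
Variables b be ga : R.
Hypothesis hbe : 0 < be.
Hypothesis h1 : 0 < b + 1.
Hypothesis h2 : b + 1 < ga.

Let a := hyp_coef b be ga.
Let p := hyp_coef (b+1) be ga.
Let g := gco b be ga.

Lemma K_eq x : Kfun b be ga x = PSeries a x / PSeries p x.
Proof. reflexivity. Qed.

Lemma part_i : Kfun b be ga 0 = 1.
Proof. unfold Kfun, hyp2F1. rewrite !PSeries_0, !hyp_coef_0. field. Qed.

Lemma part_iii : (0 <= b \/ (b < 0 /\ be <= ga)) ->
     forall u v, 0 <= u -> u < v -> v < 1 -> Kfun b be ga v < Kfun b be ga u.
Proof. intros Hc u v Hu Huv Hv.
  assert (Ru : Rabs u < 1) by (rewrite Rabs_pos_eq; lra).
  assert (Rv : Rabs v < 1) by (rewrite Rabs_pos_eq; lra).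
  assert (Pu := p_ps_pos b be ga hbe h1 h2 u ltac:(lra)). fold p in Pu.
  assert (Pv := p_ps_pos b be ga hbe h1 h2 v ltac:(lra)). fold p in Pv.
  assert (Hpn := p_pos b be ga hbe h1 h2). fold p in Hpn.
  rewrite !K_eq. destruct (Rle_lt_dec 0 b) as [Hb|Hb].
  -
    assert (Hm := mono_core a p u v Hu Huv (ex_a b be ga hbe h1 h2 u Ru) (ex_a b be ga hbe h1 h2 v Rv)
      (ex_p b be ga hbe h1 h2 u Ru) (ex_p b be ga hbe h1 h2 v Rv)).
    assert (Hr : forall n, (1 <= n)%nat -> a n = p n * (b / (b + INR n))).
    { intros n Hn. unfold a. rewrite a_eq by auto. fold p. unfold Rdiv. ring. }
    assert (Hc1 : forall k m, (k < m)%nat -> a m * p k <= a k * p m).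
    { intros k m Hkm. rewrite (Hr m) by lia. assert (1 <= INR m) by (apply (le_INR 1); lia).
      pose proof (Hpn m). pose proof (Hpn k).
      destruct k.
      - unfold a, p. rewrite !hyp_coef_0. fold p.
        assert (b / (b + INR m) <= 1). { apply Rmult_le_reg_r with (b + INR m). lra. unfold Rdiv. rewrite Rmult_assoc, Rinv_l by lra. lra. }
        nra.
      - rewrite (Hr (S k)) by lia. assert (INR (S k) <= INR m) by (apply le_INR; lia).
        assert (b / (b + INR m) <= b / (b + INR (S k))).
        { unfold Rdiv. apply Rmult_le_compat_l. lra. apply Rinv_le_contravar. assert (1 <= INR (S k)) by (apply (le_INR 1); lia). lra. lra. }
        assert (0 <= p m * p (S k)) by nra. nra. }
    specialize (Hm Hc1).
    assert (a 1%nat * p 0%nat - a 0%nat * p 1%nat < 0).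
    { unfold a at 2, p at 1. rewrite !hyp_coef_0. rewrite (Hr 1%nat) by lia. simpl INR.
      assert (b / (b + 1) < 1). { apply Rmult_lt_reg_r with (b + 1). lra. unfold Rdiv. rewrite Rmult_assoc, Rinv_l by lra. lra. }
      pose proof (Hpn 1%nat). nra. }
    apply div_lt_cross; auto. nra.
  - destruct Hc as [Hc|[_ Hc]]. lra.
    assert (Ex_g := ex_g b be ga hbe h1 h2).
    assert (Hm := mono_core p g u v Hu Huv (ex_p b be ga hbe h1 h2 u Ru) (ex_p b be ga hbe h1 h2 v Rv)
      (Ex_g u Ru) (Ex_g v Rv)).
    assert (Hc1 : forall k m, (k < m)%nat -> p m * g k <= p k * g m).
    { intros k m Hkm. unfold g, gco. fold p. pose proof (Hpn m). pose proof (Hpn k).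
      assert (INR k < INR m) by (apply lt_INR; lia). pose proof (pos_INR k).
      assert ((be + INR k) / (ga + INR k) <= (be + INR m) / (ga + INR m)).
      { apply Rminus_le_0. replace ((be + INR m) / (ga + INR m) - (be + INR k) / (ga + INR k))
          with ((ga - be) * (INR m - INR k) / ((ga + INR m) * (ga + INR k))) by (field; lra).
        apply Rdiv_le_0_compat. apply Rmult_le_pos; lra. apply Rmult_lt_0_compat; lra. }
      assert (0 <= p m * p k) by nra.
      replace (p m * (p k * (be + INR k) / (ga + INR k))) with (p m * p k * ((be + INR k) / (ga + INR k))) by (unfold Rdiv; ring).
      replace (p k * (p m * (be + INR m) / (ga + INR m))) with (p m * p k * ((be + INR m) / (ga + INR m))) by (unfold Rdiv; ring).
      apply Rmult_le_compat_l; auto. }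
    specialize (Hm Hc1). assert (H01 := Hc1 0%nat 1%nat ltac:(lia)).
    assert (Gu := g_ps_pos b be ga hbe h1 h2 u ltac:(lra)). fold g in Gu.
    assert (Gv := g_ps_pos b be ga hbe h1 h2 v ltac:(lra)). fold g in Gv.
    assert (Su := Gsplit b be ga hbe h1 h2 u Ru). assert (Sv := Gsplit b be ga hbe h1 h2 v Rv).
    fold a p g in Su, Sv.
    replace (PSeries a u) with (PSeries p u - u * PSeries g u) by lra.
    replace (PSeries a v) with (PSeries p v - v * PSeries g v) by lra.
    apply div_lt_cross; auto.
    assert (PSeries p v * PSeries g u <= PSeries p u * PSeries g v) by nra.
    assert (0 < PSeries p u * PSeries g v) by nra.
    nra. Qed.

Lemma part_iv_c : b < 0 -> forall v, 0 <= v < 1 -> b / (b + 1) <= Kfun b be ga v.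
Proof. intros Hb v Hv. assert (Rv : Rabs v < 1) by (rewrite Rabs_pos_eq; lra).
  assert (Pv := p_ps_pos b be ga hbe h1 h2 v Hv). fold p in Pv.
  assert (Hpn := p_pos b be ga hbe h1 h2). fold p in Hpn.
  set (k := b / (b + 1)).
  assert (Hc : forall n, 0 <= a n - k * p n).
  { intros n. destruct n.
    - unfold a, p. rewrite !hyp_coef_0. unfold k.
      replace (1 - b / (b+1) * 1) with (1 / (b + 1)) by (field; lra). left; apply Rdiv_lt_0_compat; lra.
    - unfold a. rewrite a_eq by (auto; lia). fold p. pose proof (pos_INR n). rewrite S_INR. unfold k.
      replace (b * p (S n) / (b + (INR n + 1)) - b / (b + 1) * p (S n))
        with ((- b) * p (S n) * (INR n / ((b + (INR n + 1)) * (b + 1)))) by (field; lra).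
      apply Rmult_le_pos. pose proof (Hpn (S n)). nra. apply Rdiv_le_0_compat; nra. }
  assert (E : PSeries (fun n => a n - k * p n) v = PSeries a v - k * PSeries p v).
  { rewrite <- PSeries_scal. rewrite <- PSeries_minus. apply PSeries_ext. intros n.
    unfold PS_minus, PS_scal, plus, opp, scal; simpl. unfold mult; simpl. ring.
    apply ex_a; auto. apply ex_pseries_scal. apply Rmult_comm. apply ex_p; auto. }
  assert (Ex : ex_pseries (fun n => a n - k * p n) v).
  { apply (ex_pseries_ext (PS_minus a (PS_scal k p))). 2: (apply ex_pseries_minus; [apply ex_a; auto | apply ex_pseries_scal; [apply Rmult_comm| apply ex_p; auto]]).
    intros n. unfold PS_minus, PS_scal, plus, opp, scal; simpl. unfold mult; simpl. ring. }
  assert (0 <= PSeries (fun n => a n - k * p n) v).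
  { apply Rle_trans with (a 0%nat - k * p 0%nat). apply Hc. apply (pos_ps (fun n => a n - k * p n)); auto. lra. }
  rewrite K_eq. apply Rmult_le_reg_r with (PSeries p v). auto.
  replace (PSeries a v / PSeries p v * PSeries p v) with (PSeries a v) by (field; lra). fold k. lra. Qed.

End Main1.


Lemma pow_le_one v n : 0 <= v <= 1 -> v ^ n <= 1.
Proof. intros Hv. rewrite <- (pow1 n). apply pow_incr. lra. Qed.

Definition Harm (N : nat) := sum_f_R0 (fun n => / (INR n + 1)) N.

Lemma ln_1p x : 0 <= x -> ln (1 + x) <= x.
Proof. intros Hx. rewrite <- (ln_exp x) at 2. apply ln_le. lra. apply exp_ineq1_le. Qed.

Lemma H_ln N : ln (INR N + 2) <= Harm N.
Proof. induction N.
  - unfold Harm; simpl. replace (0 + 2) with (1 + 1) by ring. replace (/ (0 + 1)) with 1 by field.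
    apply ln_1p; lra.
  - unfold Harm; rewrite tech5. fold (Harm N). rewrite S_INR. pose proof (pos_INR N).
    replace (INR N + 1 + 2) with ((INR N + 2) * (1 + / (INR N + 1 + 1))) by (field; lra).
    assert (0 < / (INR N + 1 + 1)) by (apply Rinv_0_lt_compat; lra).
    rewrite ln_mult by lra.
    assert (ln (1 + / (INR N + 1 + 1)) <= / (INR N + 1 + 1)) by (apply ln_1p; left; apply Rinv_0_lt_compat; lra).
    lra. Qed.

Lemma H_unb M : exists N, M < Harm N.
Proof. destruct (INR_archimed 1 (exp M)) as [N HN]. lra. exists N.
  apply Rlt_le_trans with (ln (INR N + 2)); [|apply H_ln].
  rewrite <- (ln_exp M) at 1. apply ln_increasing. apply exp_pos. lra. Qed.

Lemma H_mono n k : Harm n <= Harm (n + k).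
Proof. induction k. rewrite Nat.add_0_r; lra. rewrite Nat.add_succ_r. unfold Harm in *. rewrite tech5.
  assert (0 < / (INR (S (n + k)) + 1)) by (apply Rinv_0_lt_compat; pose proof (pos_INR (S (n+k))); lra). lra. Qed.

Lemma bernoulli v N : 0 <= v <= 1 -> 1 - INR N * (1 - v) <= v ^ N.
Proof. intros Hv. induction N. simpl; lra. rewrite S_INR. simpl.
  assert (0 <= INR N * (1 - v) * (1 - v)) by (apply Rmult_le_pos; [apply Rmult_le_pos|]; try apply pos_INR; lra).
  nra. Qed.

Section Main2.
Variables b be ga : R.
Hypothesis hbe : 0 < be.
Hypothesis h1 : 0 < b + 1.
Hypothesis h2 : b + 1 < ga.
Hypothesis h3 : ga < b + 1 + be.

Let a := hyp_coef b be ga.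
Let p := hyp_coef (b+1) be ga.

Lemma ratio_eventually : exists N0, (1 <= N0)%nat /\ forall n, (N0 <= n)%nat -> (INR n + 1) * p n <= (INR n + 2) * p (S n).
Proof. set (s := b + 1 + be - ga). set (c1 := (b+1)*be + 2*s - 1). set (c0 := 2*(b+1)*be - ga).
  assert (Hs : 0 < s) by (unfold s; lra).
  destruct (INR_archimed s (Rabs c1 + Rabs c0)) as [N HN]. lra.
  exists (S N). split. lia. intros n Hn.
  assert (Hn' : INR (S N) <= INR n) by (apply le_INR; auto). rewrite S_INR in Hn'. pose proof (pos_INR N).
  set (x := INR n) in *.
  assert (Hpol : 0 <= s * x * x + c1 * x + c0).
  { assert (s * INR N <= s * x) by (apply Rmult_le_compat_l; lra).
    assert (Rabs c1 + Rabs c0 <= s * x) by lra.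
    assert ((Rabs c1 + Rabs c0) * x <= s * x * x) by (apply Rmult_le_compat_r; lra).
    assert (- c1 <= Rabs c1) by (rewrite <- Rabs_Ropp; apply Rle_abs).
    assert (- c0 <= Rabs c0) by (rewrite <- Rabs_Ropp; apply Rle_abs).
    assert (0 <= Rabs c0) by apply Rabs_pos. assert (1 <= x) by lra.
    nra. }
  unfold p. rewrite p_S by lra. fold p. fold x. pose proof (p_pos b be ga hbe h1 h2 n) as Hp. fold p in Hp.
  assert (E : (x + 2) * (p n * ((b + 1 + x) * (be + x) / ((ga + x) * (x + 1)))) - (x + 1) * p n
    = p n * (s * x * x + c1 * x + c0) / ((ga + x) * (x + 1))).
  { unfold c1, c0, s. field. split; lra. }
  apply Rminus_le_0. rewrite E. apply Rdiv_le_0_compat. apply Rmult_le_pos; lra. apply Rmult_lt_0_compat; lra. Qed.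

Lemma sum_p_unb : forall T, exists N, T < sum_f_R0 p N.
Proof. intros T. destruct ratio_eventually as [N0 [HN0 Hr]].
  set (c := (INR N0 + 1) * p N0).
  assert (Hc : 0 < c) by (unfold c; pose proof (p_pos b be ga hbe h1 h2 N0) as Hq; fold p in Hq; pose proof (pos_INR N0); nra).
  assert (Hk : forall k, c <= (INR (N0 + k) + 1) * p (N0 + k)%nat).
  { induction k. rewrite Nat.add_0_r. unfold c; lra.
    rewrite Nat.add_succ_r. specialize (Hr (N0 + k)%nat ltac:(lia)). rewrite S_INR. lra. }
  assert (Hs : forall k, c * (Harm (N0 + k) - Harm N0) <= sum_f_R0 p (N0 + k)).
  { induction k.
    - rewrite Nat.add_0_r. replace (c * (Harm N0 - Harm N0)) with 0 by ring.
      apply cond_pos_sum. intros; left; apply p_pos; auto.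
    - rewrite Nat.add_succ_r. unfold Harm in *. rewrite !tech5. fold (Harm (N0 + k)) in *.
      specialize (Hk (S k)). rewrite Nat.add_succ_r in Hk.
      assert (0 < INR (S (N0 + k)) + 1) by (pose proof (pos_INR (S (N0 + k))); lra).
      assert (c * / (INR (S (N0 + k)) + 1) <= p (S (N0 + k))).
      { apply Rmult_le_reg_r with (INR (S (N0 + k)) + 1). auto.
        rewrite Rmult_assoc, Rinv_l by lra. lra. }
      lra. }
  destruct (H_unb (T / c + Harm N0)) as [N HN].
  exists (N0 + N)%nat. specialize (Hs N).
  assert (Harm N <= Harm (N0 + N)) by (rewrite Nat.add_comm; apply H_mono).
  assert (HT1 : T / c < Harm (N0 + N) - Harm N0) by lra.
  assert (T < c * (Harm (N0 + N) - Harm N0)).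
  { apply Rmult_lt_reg_r with (/ c). apply Rinv_0_lt_compat; auto.
    replace (c * (Harm (N0 + N) - Harm N0) * / c) with (Harm (N0 + N) - Harm N0) by (field; lra). exact HT1. }
  lra. Qed.

Lemma B_inf : forall M, exists d, 0 < d <= 1 /\ forall v, 1 - d < v < 1 -> M < PSeries p v.
Proof. intros M. destruct (sum_p_unb (2 * (Rabs M + 1))) as [N HN].
  pose proof (pos_INR N).
  exists (/ (2 * (INR N + 1))). split. split. apply Rinv_0_lt_compat; lra.
  rewrite <- Rinv_1. apply Rinv_le_contravar; lra.
  intros v Hv. assert (Hd : / (2 * (INR N + 1)) <= / 2) by (apply Rinv_le_contravar; lra).
  assert (Hv0 : 0 <= v) by lra.
  assert (Hb := bernoulli v N ltac:(lra)).
  assert (INR N * (1 - v) <= INR N * / (2 * (INR N + 1))) by (apply Rmult_le_compat_l; lra).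
  assert (INR N * / (2 * (INR N + 1)) <= / 2).
  { apply Rmult_le_reg_r with (2 * (INR N + 1)). lra. rewrite Rmult_assoc, Rinv_l by lra.
    replace (/ 2 * (2 * (INR N + 1))) with (INR N + 1) by field. lra. }
  assert (HvN : / 2 <= v ^ N) by lra.
  assert (Hps : psum p v N <= PSeries p v).
  { apply psum_le_ps; auto. intros; left; apply p_pos; auto. apply ex_p; auto. rewrite Rabs_pos_eq; lra. }
  assert (Hlow : v ^ N * sum_f_R0 p N <= psum p v N).
  { unfold psum. rewrite scal_sum. apply sum_Rle. intros n Hn.
    pose proof (p_pos b be ga hbe h1 h2 n) as H3.
    assert (H4 : v ^ N <= v ^ n).
    { replace N with (n + (N - n))%nat by lia. rewrite pow_add.
      assert (v ^ (N - n) <= 1) by (apply pow_le_one; lra). pose proof (pow_le v n Hv0). nra. }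
    apply Rmult_le_compat_l. left; exact H3. exact H4. }
  assert (0 <= Rabs M) by apply Rabs_pos. assert (M <= Rabs M) by apply Rle_abs.
  assert (0 < sum_f_R0 p N) by lra.
  nra. Qed.

Lemma abel_o eps : 0 < eps -> exists C, 0 <= C /\ forall v, 0 <= v < 1 -> Rabs (PSeries a v) <= C + eps * PSeries p v.
Proof. intros He. destruct (INR_archimed 1 (Rabs b / eps + Rabs b)) as [N2 HN]. lra.
  set (N1 := S N2).
  assert (Hbig : forall n, (N1 <= n)%nat -> Rabs (a n) <= eps * p n).
  { intros n Hn. unfold a. rewrite a_eq by (auto; unfold N1 in Hn; lia). fold p.
    assert (H0 : INR N1 <= INR n) by (apply le_INR; auto). unfold N1 in H0. rewrite S_INR in H0.
    pose proof (p_pos b be ga hbe h1 h2 n) as H1. fold p in H1.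
    assert (- b <= Rabs b) by (rewrite <- Rabs_Ropp; apply Rle_abs).
    assert (0 <= Rabs b / eps) by (apply Rdiv_le_0_compat; [apply Rabs_pos|lra]).
    assert (0 < b + INR n) by lra.
    unfold Rdiv. rewrite !Rabs_mult, Rabs_inv, (Rabs_pos_eq (p n)), (Rabs_pos_eq (b + INR n)) by lra.
    assert (Rabs b / eps * eps = Rabs b) by (field; lra).
    assert (Rabs b <= eps * (b + INR n)) by nra.
    apply Rmult_le_reg_r with (b + INR n). lra.
    replace (Rabs b * p n * / (b + INR n) * (b + INR n)) with (Rabs b * p n) by (field; lra).
    nra. }
  set (C := sum_f_R0 (fun n => Rabs (a n)) N1).
  exists C. split. apply cond_pos_sum. intros; apply Rabs_pos.
  intros v Hv. assert (Rv : Rabs v < 1) by (rewrite Rabs_pos_eq; lra).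
  set (f := fun n => Rabs (a n) * v ^ n - eps * (p n * v ^ n)).
  assert (Hpn := p_pos b be ga hbe h1 h2). fold p in Hpn.
  assert (C1 : forall N, sum_f_R0 f N <= sum_f_R0 (fun n => Rabs (a n)) N).
  { intros N. apply sum_growing. intros n. unfold f.
    assert (v ^ n <= 1) by (apply pow_le_one; lra). pose proof (pow_le v n ltac:(lra)).
    pose proof (Hpn n). pose proof (Rabs_pos (a n)).
    assert (0 <= eps * (p n * v ^ n)) by (apply Rmult_le_pos; [lra| apply Rmult_le_pos; lra]). nra. }
  assert (C2 : forall k, sum_f_R0 f (N1 + k) <= sum_f_R0 f N1).
  { induction k. rewrite Nat.add_0_r; lra. rewrite Nat.add_succ_r, tech5.
    assert (f (S (N1 + k)) <= 0).
    { unfold f. specialize (Hbig (S (N1 + k)) ltac:(lia)). pose proof (pow_le v (S (N1 + k)) ltac:(lra)). nra. }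
    lra. }
  assert (C3 : forall N, sum_f_R0 f N <= C).
  { intros N. destruct (Compare_dec.le_lt_dec N N1).
    - apply Rle_trans with (sum_f_R0 (fun n => Rabs (a n)) N). apply C1.
      unfold C. replace N1 with (N + (N1 - N))%nat by lia. apply sum_mono_idx. intros; apply Rabs_pos.
    - replace N with (N1 + (N - N1))%nat by lia. eapply Rle_trans. apply C2. apply Rle_trans with (sum_f_R0 (fun n => Rabs (a n)) N1). apply C1. unfold C; lra. }
  assert (C4 : forall N, Rabs (psum a v N) <= C + eps * psum p v N).
  { intros N. eapply Rle_trans. apply sum_f_R0_triangle.
    assert (E : sum_f_R0 (fun i => Rabs (a i * v ^ i)) N = sum_f_R0 f N + eps * psum p v N).
    { unfold f, psum. induction N. simpl. rewrite !Rmult_1_r. ring.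
      rewrite !tech5. rewrite IHN. rewrite Rabs_mult, (Rabs_pos_eq (v ^ S N)) by (apply pow_le; lra). ring. }
    cbv beta. rewrite E. specialize (C3 N). lra. }
  assert (C5 : forall N, Rabs (psum a v N) - eps * psum p v N <= C) by (intros N; specialize (C4 N); lra).
  assert (L : is_lim_seq (fun N => Rabs (psum a v N) - eps * psum p v N) (Rabs (PSeries a v) - eps * PSeries p v)).
  { apply is_lim_seq_minus'. apply (is_lim_seq_abs _ (Finite (PSeries a v))). apply ps_lim, ex_a; auto.
    apply is_lim_seq_mult'. apply is_lim_seq_const. apply ps_lim, ex_p; auto. }
  assert (L2 := lim_le_const _ _ C L C5). lra. Qed.
End Main2.


Fixpoint Rs (b be ga : R) (N : nat) : R :=
  match N with 0%nat => 0 | S k => Rs b be ga k + hyp_coef (b+1) be ga k / (ga + INR k) end.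

Section Main3.
Variables b be ga : R.
Hypothesis hbe : 0 < be.
Hypothesis h1 : 0 < b + 1.
Hypothesis h2 : b + 1 < ga.
Hypothesis h3 : ga < b + 1 + be.

Let a := hyp_coef b be ga.
Let p := hyp_coef (b+1) be ga.

Lemma part_ii : filterlim (Kfun b be ga) (at_left 1) (locally 0).
Proof. apply filterlim_locally. intros eps. pose proof (cond_pos eps) as He.
  destruct (abel_o b be ga hbe h1 h2 (eps/2)) as [C [HC HA]]. lra.
  destruct (B_inf b be ga hbe h1 h2 h3 (2 * C / eps)) as [d [Hd HB]].
  exists (mkposreal d (proj1 Hd)). intros y Hy Hy1.
  assert (Hy' : Rabs (y - 1) < d) by exact Hy. simpl in Hy'.
  apply Rabs_def2 in Hy'.
  change (Rabs (Kfun b be ga y - 0) < eps). rewrite Rminus_0_r, K_eq.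
  specialize (HB y ltac:(lra)). fold p in HB. specialize (HA y ltac:(lra)). fold a p in HA.
  assert (0 <= 2 * C / eps) by (apply Rdiv_le_0_compat; lra).
  assert (HBp : 0 < PSeries p y) by lra.
  assert (C < eps / 2 * PSeries p y).
  { assert (2 * C / eps * eps = 2 * C) by (field; lra). nra. }
  fold a p. unfold Rdiv. rewrite Rabs_mult, Rabs_inv, (Rabs_pos_eq (PSeries p y)) by lra.
  apply Rmult_lt_reg_r with (PSeries p y). auto. rewrite Rmult_assoc, Rinv_l by lra. lra. Qed.

Lemma sumS_eq N : sum_f_R0 a N = p N - (be - ga) * Rs b be ga N.
Proof. induction N. simpl. unfold a, p. rewrite !hyp_coef_0. ring.
  rewrite tech5, IHN. simpl Rs. fold p.
  assert (E := g_eq b be ga h1 h2 N). fold a p in E. pose proof (pos_INR N).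
  replace (a (S N)) with (p (S N) - p N * (be + INR N) / (ga + INR N)) by lra.
  field. lra. Qed.

Lemma Rs_nonneg N : 0 <= Rs b be ga N.
Proof. induction N; simpl. lra. pose proof (p_pos b be ga hbe h1 h2 N). pose proof (pos_INR N).
  assert (0 <= hyp_coef (b + 1) be ga N / (ga + INR N)) by (apply Rdiv_le_0_compat; lra). lra. Qed.

Lemma Rs_pos N : 0 < Rs b be ga (S N).
Proof. simpl. pose proof (Rs_nonneg N). pose proof (p_pos b be ga hbe h1 h2 N). pose proof (pos_INR N).
  assert (0 < hyp_coef (b + 1) be ga N / (ga + INR N)) by (apply Rdiv_lt_0_compat; lra). lra. Qed.

Lemma S_neg : b < 0 -> ga < be -> exists N, sum_f_R0 a N < 0.
Proof. intros Hb Hg. destruct (classic (exists N, sum_f_R0 a N < 0)) as [E|Hno]; auto. exfalso.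
  assert (Hq : forall N, (be - ga) * Rs b be ga N <= p N).
  { intros N. assert (Hn0 : ~ sum_f_R0 a N < 0) by (intro; apply Hno; eauto). rewrite sumS_eq in Hn0. lra. }
  assert (Hpn := p_pos b be ga hbe h1 h2). fold p in Hpn.
  set (p1 := p 1%nat).
  assert (Claim : forall N, p (S N) <= p1 * ga * exp (b * (Harm N - 1)) * Rs b be ga (S N)).
  { induction N.
    - unfold Harm. simpl. replace (b * (/ (0 + 1) - 1)) with 0 by field. rewrite exp_0.
      fold p. unfold p1, p. rewrite hyp_coef_0. apply Req_le. field. lra.
    - set (X := INR (S N)).
      assert (HX : 0 <= X) by apply pos_INR.
      set (E := p1 * ga * exp (b * (Harm N - 1))).
      assert (HE : 0 <= E).
      { unfold E, p1. pose proof (Hpn 1%nat). pose proof (exp_pos (b * (Harm N - 1))). apply Rmult_le_pos; [|lra]. apply Rmult_le_pos; lra. }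
      set (u1 := (b + 1 + X) / (X + 1)). set (u2 := (be + X) / (ga + X)).
      assert (Hu1 : 0 <= u1) by (unfold u1; apply Rdiv_le_0_compat; lra).
      assert (Hu2 : 0 <= u2) by (unfold u2; apply Rdiv_le_0_compat; lra).
      assert (R1 : p (S (S N)) = p (S N) * u1 * u2).
      { unfold p at 1. rewrite p_S by lra. fold p. fold X. unfold u1, u2. field. lra. }
      assert (R2 : Rs b be ga (S N) * u2 <= Rs b be ga (S (S N))).
      { change (Rs b be ga (S (S N))) with (Rs b be ga (S N) + hyp_coef (b+1) be ga (S N) / (ga + INR (S N))).
        fold p. fold X. specialize (Hq (S N)). pose proof (Rs_nonneg (S N)).
        unfold u2. apply Rminus_le_0.
        replace (Rs b be ga (S N) + p (S N) / (ga + X) - Rs b be ga (S N) * ((be + X) / (ga + X)))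
          with ((p (S N) - (be - ga) * Rs b be ga (S N)) / (ga + X)) by (field; lra).
        apply Rdiv_le_0_compat; lra. }
      assert (R3 : u1 <= exp (b / (X + 1))).
      { eapply Rle_trans. 2: apply exp_ineq1_le. unfold u1. right. field. lra. }
      assert (R4 : Harm (S N) = Harm N + / (X + 1)) by (unfold Harm; rewrite tech5; reflexivity).
      assert (R5 : p1 * ga * exp (b * (Harm (S N) - 1)) = E * exp (b / (X + 1))).
      { rewrite R4. unfold E. rewrite (Rmult_assoc (p1 * ga)), <- exp_plus. f_equal. f_equal. unfold Rdiv. ring. }
      rewrite R5, R1. pose proof (Rs_nonneg (S (S N))).
      assert (S1 : p (S N) * u1 * u2 <= E * Rs b be ga (S N) * u1 * u2).
      { apply Rmult_le_compat_r; auto. apply Rmult_le_compat_r; auto. }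
      assert (S2 : E * Rs b be ga (S N) * u1 * u2 = E * u1 * (Rs b be ga (S N) * u2)) by ring.
      assert (S3 : E * u1 * (Rs b be ga (S N) * u2) <= E * u1 * Rs b be ga (S (S N))).
      { apply Rmult_le_compat_l; auto. apply Rmult_le_pos; auto. }
      assert (S4 : E * u1 * Rs b be ga (S (S N)) <= E * exp (b / (X + 1)) * Rs b be ga (S (S N))).
      { apply Rmult_le_compat_r; auto. apply Rmult_le_compat_l; auto. }
      lra. }
  assert (Hp1 : 0 < p1) by apply Hpn.
  assert (Hga : 0 < ga) by lra.
  set (L := ln ((be - ga) / (2 * (p1 * ga)))).
  destruct (H_unb (L / b + 1)) as [N HN].
  assert (HL : b * (Harm N - 1) < L).
  { assert (Harm N - 1 > L / b) by lra.
    assert (HL2 : b * (L / b) > b * (Harm N - 1)) by (apply Rmult_lt_gt_compat_neg_l; lra).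
    replace (b * (L / b)) with L in HL2 by (field; lra). lra. }
  assert (Hexp : exp (b * (Harm N - 1)) < (be - ga) / (2 * (p1 * ga))).
  { rewrite <- (exp_ln ((be - ga) / (2 * (p1 * ga)))). apply exp_increasing. auto.
    apply Rdiv_lt_0_compat; nra. }
  specialize (Claim N). specialize (Hq (S N)). pose proof (Rs_pos N). pose proof (Hpn (S N)).
  assert (p1 * ga * exp (b * (Harm N - 1)) < (be - ga) / 2).
  { apply Rmult_lt_reg_r with (/ (p1 * ga)). apply Rinv_0_lt_compat; nra.
    replace (p1 * ga * exp (b * (Harm N - 1)) * / (p1 * ga)) with (exp (b * (Harm N - 1))) by (field; lra).
    replace ((be - ga) / 2 * / (p1 * ga)) with ((be - ga) / (2 * (p1 * ga))) by (field; lra). auto. }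
  assert (p1 * ga * exp (b * (Harm N - 1)) * Rs b be ga (S N) < (be - ga) / 2 * Rs b be ga (S N)).
  { apply Rmult_lt_compat_r; auto. }
  lra. Qed.

End Main3.


Section Main4.
Variables b be ga : R.
Hypothesis hbe : 0 < be.
Hypothesis h1 : 0 < b + 1.
Hypothesis h2 : b + 1 < ga.
Hypothesis h3 : ga < b + 1 + be.

Let a := hyp_coef b be ga.
Let p := hyp_coef (b+1) be ga.

Lemma a_neg_coef n : b < 0 -> (1 <= n)%nat -> a n < 0.
Proof. intros Hb Hn. unfold a. rewrite a_eq by auto. fold p. pose proof (p_pos b be ga hbe h1 h2 n) as Hp. fold p in Hp.
  assert (1 <= INR n) by (apply (le_INR 1); auto).
  unfold Rdiv. assert (0 < / (b + INR n)) by (apply Rinv_0_lt_compat; lra).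
  assert (b * p n < 0) by nra. nra. Qed.

Lemma A_neg : b < 0 -> ga < be -> exists d, 0 < d <= 1 /\ forall v, 1 - d < v < 1 -> PSeries a v < 0.
Proof. intros Hb Hg. destruct (S_neg b be ga hbe h1 h2 Hb Hg) as [N HN]. fold a in HN.
  set (Sm := sum_f_R0 a N). set (T := sum_f_R0 (fun n => Rabs (a n)) N).
  assert (HT : 0 <= T) by (apply cond_pos_sum; intros; apply Rabs_pos).
  pose proof (pos_INR N) as HNp.
  assert (HNT : 0 <= INR N * T) by (apply Rmult_le_pos; auto).
  set (d := Rmin 1 (- Sm / (2 * (INR N * T + 1)))).
  assert (Hd1 : 0 < - Sm / (2 * (INR N * T + 1))) by (apply Rdiv_lt_0_compat; unfold Sm; lra).
  exists d. split. split. unfold d. apply Rmin_glb_lt; lra. apply Rmin_l.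
  intros v Hv. assert (Hv0 : 0 <= v).
  { assert (d <= 1) by apply Rmin_l. lra. }
  assert (Rv : Rabs v < 1) by (rewrite Rabs_pos_eq; lra).
  assert (Tail : forall k, psum a v (k + N) <= psum a v N).
  { induction k. simpl; lra. change (S k + N)%nat with (S (k + N)). rewrite psum_S.
    assert (a (S (k + N)) * v ^ S (k + N) <= 0).
    { pose proof (a_neg_coef (S (k + N)) Hb ltac:(lia)). pose proof (pow_le v (S (k + N)) Hv0). nra. }
    lra. }
  assert (L1 : PSeries a v <= psum a v N).
  { apply lim_le_const with (fun k => psum a v (k + N)); auto.
    apply (is_lim_seq_incr_n (psum a v) N). apply ps_lim. apply ex_a; auto. }
  assert (L2 : psum a v N <= Sm + T * (INR N * (1 - v))).
  { unfold Sm, T, psum. rewrite (Rmult_comm (sum_f_R0 (fun n => Rabs (a n)) N)), scal_sum, <- plus_sum. apply sum_Rle. intros n Hn.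
    assert (B1 := bernoulli v n ltac:(lra)).
    assert (B2 : v ^ n <= 1) by (apply pow_le_one; lra).
    assert (INR n <= INR N) by (apply le_INR; auto).
    assert (INR n * (1 - v) <= INR N * (1 - v)) by (apply Rmult_le_compat_r; lra).
    assert (a n * (v ^ n - 1) <= Rabs (a n) * (1 - v ^ n)).
    { replace (a n * (v ^ n - 1)) with ((- a n) * (1 - v ^ n)) by ring.
      apply Rmult_le_compat_r. lra. rewrite <- Rabs_Ropp. apply Rle_abs. }
    assert (Rabs (a n) * (1 - v ^ n) <= Rabs (a n) * (INR N * (1 - v))).
    { apply Rmult_le_compat_l. apply Rabs_pos. lra. }
    lra. }
  assert (Hdd : 1 - v < - Sm / (2 * (INR N * T + 1))).
  { assert (d <= - Sm / (2 * (INR N * T + 1))) by apply Rmin_r. lra. }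
  assert (T * (INR N * (1 - v)) <= (INR N * T + 1) * (1 - v)) by nra.
  assert ((INR N * T + 1) * (1 - v) < (INR N * T + 1) * (- Sm / (2 * (INR N * T + 1)))) by (apply Rmult_lt_compat_l; lra).
  replace ((INR N * T + 1) * (- Sm / (2 * (INR N * T + 1)))) with (- Sm / 2) in H0 by (field; lra).
  unfold Sm in *. lra. Qed.

Lemma K_neg : b < 0 -> ga < be -> exists d, 0 < d <= 1 /\ forall v, 1 - d < v < 1 -> Kfun b be ga v < 0.
Proof. intros Hb Hg. destruct (A_neg Hb Hg) as [d [Hd HA]]. exists d. split; auto.
  intros v Hv. rewrite K_eq. fold a p. assert (0 < PSeries p v) by (apply p_ps_pos; auto; lra).
  specialize (HA v Hv). unfold Rdiv. assert (0 < / PSeries p v) by (apply Rinv_0_lt_compat; auto). nra. Qed.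

Lemma part_iv_lim : b < 0 -> ga < be -> filterlim (Kfun b be ga) (at_left 1) (at_left 0).
Proof. intros Hb Hg P [e He]. destruct (K_neg Hb Hg) as [d [Hd HK]].
  assert (L := proj1 (filterlim_locally (Kfun b be ga) 0) (part_ii b be ga hbe h1 h2 h3) e).
  destruct L as [d1 Hd1].
  assert (Hm : 0 < Rmin d d1) by (apply Rmin_glb_lt; [lra| apply cond_pos]).
  exists (mkposreal _ Hm). intros y Hy Hy1.
  assert (Hy' : Rabs (y - 1) < Rmin d d1) by exact Hy. simpl in Hy'.
  assert (Hyd1 : ball 1 d1 y).
  { change (Rabs (y - 1) < d1). assert (Rmin d d1 <= d1) by apply Rmin_r. lra. }
  apply He. apply (Hd1 y Hyd1 Hy1).
  apply HK. apply Rabs_def2 in Hy'. assert (Rmin d d1 <= d) by apply Rmin_l. lra. Qed.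

Lemma part_iv_min : b < 0 -> ga < be -> exists v0, 0 <= v0 < 1 /\ Kfun b be ga v0 < 0 /\
        forall v, 0 <= v < 1 -> Kfun b be ga v0 <= Kfun b be ga v.
Proof. intros Hb Hg. destruct (K_neg Hb Hg) as [d [Hd HK]].
  set (v1 := 1 - d / 2). assert (Hv1 : Kfun b be ga v1 < 0) by (apply HK; unfold v1; lra).
  assert (He : 0 < - Kfun b be ga v1 / 2) by lra.
  assert (L := proj1 (filterlim_locally (Kfun b be ga) 0) (part_ii b be ga hbe h1 h2 h3) (mkposreal _ He)).
  destruct L as [d2 Hd2]. pose proof (cond_pos d2) as Hd2p.
  set (c := Rmax v1 (1 - d2 / 2)).
  assert (Hc1 : v1 <= c) by apply Rmax_l. assert (Hc2 : 1 - d2 / 2 <= c) by apply Rmax_r.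
  assert (Hc3 : c < 1) by (unfold c; apply Rmax_lub_lt; unfold v1; lra).
  assert (Hv10 : 0 <= v1) by (unfold v1; lra).
  destruct (continuity_ab_min (Kfun b be ga) 0 c ltac:(lra)) as [mx [Hmin Hmx]].
  { intros x Hx. assert (Rx : Rabs x < 1) by (rewrite Rabs_pos_eq; lra).
    change (continuity_pt (fun x => PSeries a x / PSeries p x) x).
    apply (continuity_pt_div (PSeries a) (PSeries p)). apply cont_a; auto. apply cont_p; auto.
    assert (0 < PSeries p x) by (apply p_ps_pos; auto; lra). lra. }
  exists mx. assert (Hmv1 := Hmin v1 ltac:(lra)). split. lra. split. lra.
  intros v Hv. destruct (Rle_lt_dec v c). apply Hmin; lra.
  assert (Hb2 : ball 0 (- Kfun b be ga v1 / 2) (Kfun b be ga v)).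
  { apply (Hd2 v). change (Rabs (v - 1) < d2). rewrite Rabs_left; lra. lra. }
  change (Rabs (Kfun b be ga v - 0) < - Kfun b be ga v1 / 2) in Hb2.
  apply Rabs_def2 in Hb2. lra. Qed.

End Main4.


Theorem lemma3p4 (b be ga : R) (hbe : 0 < be)
  (h1 : 0 < b + 1) (h2 : b + 1 < ga) (h3 : ga < b + 1 + be) :
  (* (i) *)
  Kfun b be ga 0 = 1 /\
  (* (ii) *)
  filterlim (Kfun b be ga) (at_left 1) (locally 0) /\
  (* (iii) *)
  ((0 <= b \/ (b < 0 /\ be <= ga)) ->
     forall u v, 0 <= u -> u < v -> v < 1 -> Kfun b be ga v < Kfun b be ga u) /\
  (* (iv) *)
  (b < 0 -> ga < be ->
     (exists v0, 0 <= v0 < 1 /\ Kfun b be ga v0 < 0 /\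
        forall v, 0 <= v < 1 -> Kfun b be ga v0 <= Kfun b be ga v) /\
     filterlim (Kfun b be ga) (at_left 1) (at_left 0) /\
     (forall v, 0 <= v < 1 -> b / (b + 1) <= Kfun b be ga v)).
Proof.
  split. apply part_i.
  split. apply part_ii; auto.
  split. intros Hc. apply part_iii; auto.
  intros Hb Hg. split. apply part_iv_min; auto.
  split. apply part_iv_lim; auto.
  intros v Hv. apply part_iv_c; auto.
Qed.
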